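(* Let $A$ be a system of $n_A$ qubits and $B$ a system of $n_B$ qubits. Let $\mathcal{P}$ be a CPTP map from operators on $H_{A_1}\otimes H_{B_1}$ (the systems at time $t_1$) to operators on $H_{A_2}\otimes H_{B_2}$ (the systems at time $t_2$) that does not allow signalling from $B$ to $A$, i.e. there exists a completely positive map $\mathcal{T}$ from operators on $H_{A_1}$ to operators on $H_{A_2}$ with $\mathrm{Tr}_{B_2}\mathcal{P}(\rho_{A_1B_1})=\mathcal{T}(\mathrm{Tr}_{B_1}\rho_{A_1B_1})$ for all states $\rho_{A_1B_1}$. Then for every state $\rho_{A_1B_1}$ at time $t_1$, the pseudo-density matrix $R_{B_1A_2}$ (defined in the context) is positive semidefinite, and $f(R_{B_1A_2})=0$.
   Context: Pauli matrices $\sigma_0=\mathbb{1},\sigma_1,\sigma_2,\sigma_3$; multi-qubit Pauli matrices are tensor products of these. The coarse-grained measurement of a Pauli matrix $\Sigma$ on the full system $AB$ is the projective measurement $\{(\mathbb{1}\pm\Sigma)/2\}$ with outcomes $\pm1$ and Lüders update $\rho\mapsto P_\pm\rho P_\pm$. For an $n_B$-qubit Pauli $\tilde\sigma_j$ and an $n_A$-qubit Pauli $\tilde\sigma_k$, consider the experiment: prepare $\rho_{A_1B_1}$; at $t_1$ perform the coarse-grained measurement of $\mathbb{1}_A\otimes\tilde\sigma_j$; apply $\mathcal{P}$ to the post-measurement state; at $t_2$ perform the coarse-grained measurement of $\tilde\sigma_k\otimes\mathbb{1}_B$. Let $\langle\tilde\sigma_j^{B_1},\tilde\sigma_k^{A_2}\rangle$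 be the expectation of the product of the two outcomes. The pseudo-density matrix is $R_{B_1A_2}=2^{-(n_A+n_B)}\sum_{j=0}^{4^{n_B}-1}\sum_{k=0}^{4^{n_A}-1}\langle\tilde\sigma_j^{B_1},\tilde\sigma_k^{A_2}\rangle\,\tilde\sigma_j\otimes\tilde\sigma_k$ (equivalently, the partial trace over $A_1B_2$ of the two-time pseudo-density matrix of the full system $AB$). The PDM negativity (causal monotone) is $f(R)=\|R\|_{tr}-1=\mathrm{Tr}\sqrt{RR^\dagger}-1$. *)

(* Defs.v *)
From HB Require Import structures.
From mathcomp Require Import all_boot all_order all_algebra.
From mathcomp Require Import mxtens.
From Stdlib Require Import ClassicalEpsilon.
Set Implicit Arguments. Unset Strict Implicit. Unset Printing Implicit Defensive.
Import Order.TTheory GRing.Theory Num.Theory.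
Local Open Scope ring_scope.

Section QDefs.
Variable C : numClosedFieldType.

Definition adjmx {m n} (M : 'M[C]_(m, n)) : 'M[C]_(n, m) := (map_mx Num.conj M)^T.

Definition psd {n} (M : 'M[C]_n) : Prop :=
  adjmx M = M /\ forall v : 'cV[C]_n, 0 <= (adjmx v *m M *m v) 0 0.

Definition is_state {n} (rho : 'M[C]_n) : Prop := psd rho /\ \tr rho = 1.

(* the (unique) PSD square root, chosen classically *)
Definition sqrtm {n} (M : 'M[C]_n) : 'M[C]_n :=
  epsilon (inhabits 0) (fun S => psd S /\ S *m S = M).

Definition trnorm {n} (R : 'M[C]_n) : C := \tr (sqrtm (R *m adjmx R)).
Definition pdm_negativity {n} (R : 'M[C]_n) : C := trnorm R - 1.

Definition ptrace2 {m n} (M : 'M[C]_(m * n)) : 'M[C]_m :=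
  \matrix_(i, j) \sum_(k < n) M (mxtens_index (i, k)) (mxtens_index (j, k)).

(* ampliation id_k (x) Phi *)
Definition ampl (k : nat) {m n} (Phi : 'M[C]_m -> 'M[C]_n) (M : 'M[C]_(k * m))
  : 'M[C]_(k * n) :=
  \matrix_(I, J)
    Phi (\matrix_(x, y) M (mxtens_index ((mxtens_unindex I).1, x))
                          (mxtens_index ((mxtens_unindex J).1, y)))
        (mxtens_unindex I).2 (mxtens_unindex J).2.

Definition completely_positive {m n} (Phi : 'M[C]_m -> 'M[C]_n) : Prop :=
  forall (k : nat) (M : 'M[C]_(k * m)), psd M -> psd (@ampl k m n Phi M).

Definition trace_preserving {m n} (Phi : 'M[C]_m -> 'M[C]_n) : Prop :=
  forall M : 'M[C]_m, \tr (Phi M) = \tr M.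

Definition sigma (a : 'I_4) : 'M[C]_2 :=
  match val a with
  | 0 => 1%:M
  | 1 => \matrix_(i, j) (if i == j then 0 else 1)
  | 2 => \matrix_(i, j) (if i == j then 0 else if (i : nat) == 0 then - 'i else 'i)
  | _ => \matrix_(i, j) (if i == j then (if (i : nat) == 0 then 1 else -1) else 0)
  end.

Fixpoint pauliN (n : nat) : (nat -> 'I_4) -> 'M[C]_(2 ^ n) :=
  match n return (nat -> 'I_4) -> 'M[C]_(2 ^ n) with
  | 0 => fun _ => 1%:M
  | n'.+1 => fun f =>
      castmx (esym (expnS 2 n'), esym (expnS 2 n'))
        (sigma (f 0) *t pauliN n' (fun k => f k.+1))
  end.

Definition pauli {n} (t : n.-tuple 'I_4) : 'M[C]_(2 ^ n) :=
  pauliN n (fun k => nth ord0 t k).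

(* projector (1 + (-1)^s Sigma)/2 of the coarse-grained measurement of Sigma,
   outcome (-1)^s *)
Definition proj_out {d} (s : bool) (S : 'M[C]_d) : 'M[C]_d :=
  (2%:R)^-1 *: (1%:M + ((-1) ^+ s) *: S).

(* <Sigma1 at t1, Sigma2 at t2>: expectation of the product of outcomes when
   Sigma1 is measured (Lueders update), then P applied, then Sigma2 measured *)
Definition two_time_corr {d} (P : 'M[C]_d -> 'M[C]_d) (rho S1 S2 : 'M[C]_d) : C :=
  \sum_(a : bool) \sum_(b : bool)
     ((-1) ^+ a * (-1) ^+ b) *
     \tr (proj_out b S2 *m P (proj_out a S1 *m rho *m proj_out a S1)).

(* pseudo-density matrix R_{B1 A2} (ordering B (x) A) *)
Definition pdm_B1A2 (nA nB : nat) (P : 'M[C]_(2 ^ nA * 2 ^ nB) -> 'M[C]_(2 ^ nA * 2 ^ nB))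
  (rho : 'M[C]_(2 ^ nA * 2 ^ nB)) : 'M[C]_(2 ^ nB * 2 ^ nA) :=
  ((2%:R) ^+ (nA + nB))^-1 *:
    \sum_(j : nB.-tuple 'I_4) \sum_(k : nA.-tuple 'I_4)
      two_time_corr P rho (1%:M *t pauli j) (pauli k *t 1%:M) *: (pauli j *t pauli k).

End QDefs.

(* Main.v *)
Require Import Defs.
From HB Require Import structures.
From mathcomp Require Import all_boot all_order all_algebra.
From mathcomp Require Import mxtens.
From Stdlib Require Import ClassicalEpsilon.
From mathcomp Require Import ring.
Set Implicit Arguments. Unset Strict Implicit. Unset Printing Implicit Defensive.
Import Order.TTheory GRing.Theory Num.Theory.
Local Open Scope ring_scope.



Section PSD.
Variable C : numClosedFieldType.

Lemma adjmxE m n (A : 'M[C]_(m,n)) i j : adjmx A i j = (A j i)^*.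
Proof. by rewrite !mxE. Qed.

Lemma adjmxM m n p (A : 'M[C]_(m,n)) (B : 'M[C]_(n,p)) :
  adjmx (A *m B) = adjmx B *m adjmx A.
Proof. by rewrite /adjmx map_mxM trmx_mul. Qed.

Lemma adjmxK m n (A : 'M[C]_(m,n)) : adjmx (adjmx A) = A.
Proof. by apply/matrixP => i j; rewrite !adjmxE conjCK. Qed.

Lemma adjmxD m n (A B : 'M[C]_(m,n)) : adjmx (A + B) = adjmx A + adjmx B.
Proof. by apply/matrixP => i j; rewrite !mxE rmorphD. Qed.

Lemma adjmxN m n (A : 'M[C]_(m,n)) : adjmx (- A) = - adjmx A.
Proof. by apply/matrixP => i j; rewrite !mxE rmorphN. Qed.

Lemma adjmxZ m n a (A : 'M[C]_(m,n)) : adjmx (a *: A) = a^* *: adjmx A.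
Proof. by apply/matrixP => i j; rewrite !mxE rmorphM. Qed.

Lemma adjmx1 n : adjmx (1%:M : 'M[C]_n) = 1%:M.
Proof. by apply/matrixP => i j; rewrite !mxE eq_sym rmorph_nat. Qed.

Lemma mxDE m n (A B : 'M[C]_(m,n)) i j : (A + B) i j = A i j + B i j.
Proof. by rewrite mxE. Qed.
Lemma mxZE m n a (A : 'M[C]_(m,n)) i j : (a *: A) i j = a * A i j.
Proof. by rewrite mxE. Qed.

Lemma adj_self_ge0 n (w : 'cV[C]_n) : 0 <= (adjmx w *m w) 0 0.
Proof. rewrite !mxE; apply: sumr_ge0 => i _; rewrite !mxE mulrC; exact: mul_conjC_ge0. Qed.

Lemma adj_self_eq0 n (w : 'cV[C]_n) : (adjmx w *m w) 0 0 = 0 -> w = 0.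
Proof.
rewrite !mxE => h; apply/matrixP => i j; rewrite (ord1 j) mxE.
have := psumr_eq0P (P := xpredT) _ h (i := i) isT.
rewrite !mxE mulrC => /(_ _)/eqP; rewrite mul_conjC_eq0 => /(_ _)/eqP; apply.
by move=> k _; rewrite !mxE mulrC; exact: mul_conjC_ge0.
Qed.

Lemma psd_form_eq0 n (Q : 'M[C]_n) (u : 'cV[C]_n) :
  psd Q -> (adjmx u *m Q *m u) 0 0 = 0 -> Q *m u = 0.
Proof.
move=> [hQ hpos] h0; set w := Q *m u.
set a := (adjmx w *m w) 0 0; set b := (adjmx w *m Q *m w) 0 0.
have ha : 0 <= a := adj_self_ge0 w.
have hb : 0 <= b := hpos w.
set t := - (a / (b + 1)).
have hb1 : 0 < b + 1 by rewrite ltr_wpDl.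
have ht : t^* = t.
  rewrite /t rmorphN rmorphM fmorphV rmorphD rmorph1.
  by congr (- (_ / (_ + 1))); apply: conj_Creal; rewrite ger0_real.
have hw1 : adjmx u *m Q = adjmx w by rewrite /w adjmxM hQ.
have E : adjmx (u + t *: w) *m Q *m (u + t *: w) = adjmx u *m Q *m u +
    (t *: (adjmx w *m w) + (t *: (adjmx w *m w) + (t * t) *: (adjmx w *m Q *m w))).
  rewrite adjmxD adjmxZ ht !mulmxDl !mulmxDr -!scalemxAl -!scalemxAr scalerA.
  rewrite -[adjmx w *m Q *m u]mulmxA -/w [in adjmx u *m Q *m w]hw1.
  by rewrite -!addrA.
have := hpos (u + t *: w); rewrite E !mxDE !mxZE h0 -/a -/b.
have -> : 0 + (t * a + (t * a + t * t * b)) = - ((a ^+ 2 * (b + 2%:R)) / (b + 1) ^+ 2).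
  rewrite /t; field. by rewrite lt0r_neq0.
rewrite oppr_ge0 => hle.
have hge : 0 <= a ^+ 2 * (b + 2%:R) / (b + 1) ^+ 2.
  apply: mulr_ge0; last by rewrite invr_ge0 exprn_ge0 // ltW.
  by apply: mulr_ge0; [exact: exprn_ge0 | rewrite addr_ge0].
have : a ^+ 2 * (b + 2%:R) / (b + 1) ^+ 2 = 0 by apply/eqP; rewrite eq_le hle hge.
move/eqP; rewrite !mulf_eq0 invr_eq0 expf_eq0 /= orbb.
rewrite (negbTE (lt0r_neq0 hb1)) orbF.
have -> : (b + 2%:R == 0) = false by apply/negbTE; rewrite lt0r_neq0 // ltr_wpDl.
rewrite orbF => /eqP ha0; exact: adj_self_eq0.
Qed.

Lemma tr_adj_decomp n (Q A : 'M[C]_n) :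
  \tr (adjmx A *m Q *m A) = \sum_i (adjmx (col i A) *m Q *m col i A) 0 0.
Proof.
rewrite /mxtrace; apply: congr_big => // i _; rewrite !mxE; apply: congr_big => // k _.
rewrite !mxE; congr (_ * _); apply: eq_bigr => l _; by rewrite !mxE.
Qed.

Lemma psd_tr_ge0 n (Q A : 'M[C]_n) : psd Q -> 0 <= \tr (adjmx A *m Q *m A).
Proof. by move=> [_ hp]; rewrite tr_adj_decomp; apply: sumr_ge0 => i _. Qed.

Lemma psd_tr_eq0 n (Q A : 'M[C]_n) : psd Q -> \tr (adjmx A *m Q *m A) = 0 -> Q *m A = 0.
Proof.
move=> hQ; rewrite tr_adj_decomp => h; apply/matrixP => k i.
have := psumr_eq0P (P := xpredT) (fun i _ => hQ.2 (col i A)) h (i := i) isT.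
move/(psd_form_eq0 hQ)/matrixP/(_ k 0); rewrite !mxE => e.
apply: etrans e; by apply: eq_bigr => l _; rewrite !mxE.
Qed.

Lemma psdD n (S R : 'M[C]_n) : psd S -> psd R -> psd (S + R).
Proof.
move=> [hS pS] [hR pR]; split; first by rewrite adjmxD hS hR.
by move=> v; rewrite mulmxDr mulmxDl mxDE addr_ge0.
Qed.

Lemma psd1 n : psd (1%:M : 'M[C]_n).
Proof. split; first exact: adjmx1. by move=> v; rewrite mulmx1 adj_self_ge0. Qed.

Lemma zmod_aux (V : zmodType) (a b c : V) : (a + b) - (c + a) + ((a - b) + (c - a)) = 0.
Proof. by rewrite (addrC a b) (addrC c a) addrKA (addrC (a - b)) subrKA subrKA subrr. Qed.

Lemma psd_sqrt_unique n (S R : 'M[C]_n) : psd S -> psd R -> S *m S = R *m R -> S = R.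
Proof.
move=> pS pR hSR.
set X := S - R; set Y := S + R.
have hX : adjmx X = X by rewrite /X adjmxD adjmxN pS.1 pR.1.
have pY : psd Y := psdD pS pR.
have hXY : X *m Y = - (Y *m X).
  apply/eqP; rewrite -subr_eq0 opprK /X /Y mulmxBl mulmxDl !mulmxDr !mulmxN hSR.
  by rewrite zmod_aux.
have tr0 : \tr (adjmx X *m Y *m X) = 0.
  have e : \tr (X *m Y *m X) = - \tr (X *m Y *m X).
    rewrite {1}hXY mulNmx raddfN; congr (- _).
    apply: etrans (mxtrace_mulC (Y *m X) X) _; by rewrite mulmxA.
  rewrite hX; apply/eqP; move/eqP: e; rewrite -addr_eq0 -mulr2n mulrn_eq0 //.
have YX0 : Y *m X = 0 by apply: psd_tr_eq0 pY tr0.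
have XY0 : X *m Y = 0 by rewrite hXY YX0 oppr0.
have e2 : \tr (adjmx X *m S *m X) + \tr (adjmx X *m R *m X) = 0.
  by rewrite -mxtraceD hX -mulmxDl -mulmxDr -/Y XY0 mul0mx mxtrace0.
move/eqP: e2; rewrite paddr_eq0 ?psd_tr_ge0 // => /andP[/eqP eS /eqP eR].
have SX := psd_tr_eq0 pS eS; have RX := psd_tr_eq0 pR eR.
have : \tr (adjmx X *m 1%:M *m X) = 0.
  by rewrite mulmx1 hX {1}/X mulmxBl SX RX subrr mxtrace0.
move/(psd_tr_eq0 (psd1 n)); rewrite mul1mx => /eqP; rewrite subr_eq0 => /eqP //.
Qed.

End PSD.



Section Pauli.
Variable C : numClosedFieldType.

Lemma sigma_complete (a b c d : 'I_2) :
  \sum_(s < 4) (sigma C s a b * sigma C s c d) = 2%:R * ((a == d) && (b == c))%:R.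
Proof.
rewrite !big_ord_recr big_ord0 /= add0r.
case: a => [[|[|]]] //; case: b => [[|[|]]] //; case: c => [[|[|]]] //; case: d => [[|[|]]] // *;
rewrite /sigma /= !mxE /=.
all: rewrite ?mulrNN ?mulNr ?mulrN -?expr2 ?sqrCi; ring.
Qed.

Lemma sigma_herm (s : 'I_4) (a b : 'I_2) : (sigma C s b a)^* = sigma C s a b.
Proof.
case: s => [[|[|[|[|]]]]] // ?;
case: a => [[|[|]]] //; case: b => [[|[|]]] // *;
rewrite /sigma /= !mxE /=.
all: rewrite ?rmorphN ?conjCi ?opprK ?rmorph1 ?rmorph0 ?rmorphN1 //.
by rewrite -[RHS]opprK; congr (- _); exact: conjCi.
Qed.

Lemma ord_tensP n (a : 'I_(2 ^ n.+1)) :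
  exists a1 a2, a = cast_ord (esym (expnS 2 n)) (mxtens_index (a1, a2)).
Proof.
exists (mxtens_unindex (cast_ord (expnS 2 n) a)).1.
exists (mxtens_unindex (cast_ord (expnS 2 n) a)).2.
by rewrite -surjective_pairing mxtens_unindexK; apply: val_inj.
Qed.

Lemma cast_tens_eq n (a1 d1 : 'I_2) (a2 d2 : 'I_(2 ^ n)) :
  (cast_ord (esym (expnS 2 n)) (mxtens_index (a1, a2)) ==
   cast_ord (esym (expnS 2 n)) (mxtens_index (d1, d2))) = (a1 == d1) && (a2 == d2).
Proof.
by rewrite (inj_eq (@cast_ord_inj _ _ _)) (inj_eq (can_inj (@mxtens_indexK _ _))) xpair_eqE.
Qed.

Lemma pauli_cons n (x : 'I_4) (t : n.-tuple 'I_4) :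
  pauli C (cons_tuple x t) =
  castmx (esym (expnS 2 n), esym (expnS 2 n)) (sigma C x *t pauli C t).
Proof. by []. Qed.

Lemma pauli_consE n (x : 'I_4) (t : n.-tuple 'I_4) a1 a2 b1 b2 :
  pauli C (cons_tuple x t) (cast_ord (esym (expnS 2 n)) (mxtens_index (a1, a2)))
     (cast_ord (esym (expnS 2 n)) (mxtens_index (b1, b2)))
  = sigma C x a1 b1 * pauli C t a2 b2.
Proof.
rewrite pauli_cons castmxE /=.
have e : forall (a : 'I_2) (b : 'I_(2 ^ n)), cast_ord (esym (esym (expnS 2 n)))
   (cast_ord (esym (expnS 2 n)) (mxtens_index (a, b))) = mxtens_index (a, b).
  by move=> a b; apply: val_inj.
by rewrite !e tensmxE.
Qed.

Lemma big_tuple_cons (T : finType) n (F : n.+1.-tuple T -> C) :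
  \sum_(t : n.+1.-tuple T) F t = \sum_(x : T) \sum_(t : n.-tuple T) F (cons_tuple x t).
Proof.
rewrite pair_big /=.
rewrite (reindex (fun p : T * n.-tuple T => cons_tuple p.1 p.2)) //=.
exists (fun t : n.+1.-tuple T => (thead t, behead_tuple t)).
  by move=> [x t] _ /=; congr (_, _); apply: val_inj.
by move=> t _ /=; apply: val_inj; rewrite /= [in RHS](tuple_eta t).
Qed.

Lemma pauli_complete n (a b c d : 'I_(2 ^ n)) :
  \sum_(t : n.-tuple 'I_4) pauli C t a b * pauli C t c d
  = (2 ^ n)%:R * ((a == d) && (b == c))%:R.
Proof.
elim: n a b c d => [|n IH] a b c d.
  have e : forall z : 'I_(2 ^ 0), z = ord0.
    by move=> z; apply: val_inj; case: z => [[|]] //=.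
  rewrite (e a) (e b) (e c) (e d) !eqxx /=.
  rewrite (eq_bigr (fun _ => 1)); last by move=> t _; rewrite /pauli /= !mxE mulr1.
  by rewrite sumr_const card_tuple card_ord expn0 mulr1.
move: (ord_tensP a) (ord_tensP b) (ord_tensP c) (ord_tensP d).
move=> [a1 [a2 ->]] [b1 [b2 ->]] [c1 [c2 ->]] [d1 [d2 ->]].
rewrite big_tuple_cons.
transitivity ((\sum_(x < 4) sigma C x a1 b1 * sigma C x c1 d1) *
              \sum_(t : n.-tuple 'I_4) pauli C t a2 b2 * pauli C t c2 d2).
  rewrite mulr_suml; apply: eq_bigr => x _; rewrite mulr_sumr; apply: eq_bigr => t _.
  by rewrite !pauli_consE mulrACA.
rewrite sigma_complete IH !cast_tens_eq expnS natrM mulrACA.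
by case: (a1 == d1); case: (a2 == d2); case: (b1 == c1); case: (b2 == c2); rewrite /= ?mulr0 ?mulr1 ?mul0r ?mul1r ?mulr0.
Qed.

Lemma pauli_herm_entry n (t : n.-tuple 'I_4) a b : (pauli C t b a)^* = pauli C t a b.
Proof.
elim: n t a b => [|n IH] t a b.
  have e : forall z : 'I_(2 ^ 0), z = ord0.
    by move=> z; apply: val_inj; case: z => [[|]] //=.
  by rewrite (e a) (e b) /pauli /= !mxE /= rmorph1.
case/tupleP: t => x t.
move: (ord_tensP a) (ord_tensP b) => [a1 [a2 ->]] [b1 [b2 ->]].
by rewrite !pauli_consE rmorphM; congr (_ * _); [exact: sigma_herm | exact: IH].
Qed.

Lemma pauli_herm n (t : n.-tuple 'I_4) : adjmx (pauli C t) = pauli C t.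
Proof. by apply/matrixP => i j; rewrite !mxE pauli_herm_entry. Qed.

End Pauli.



Section Tens.
Variable C : numClosedFieldType.

Lemma sum_tens m n (F : 'I_(m * n) -> C) :
  \sum_I F I = \sum_(i < m) \sum_(j < n) F (mxtens_index (i, j)).
Proof.
transitivity (\sum_(p : 'I_m * 'I_n) F (mxtens_index p)); last first.
  by rewrite pair_big; apply: eq_bigr => -[].
rewrite (reindex (@mxtens_index m n)) //=.
by exists (@mxtens_unindex m n) => i _; rewrite (mxtens_indexK, mxtens_unindexK).
Qed.

Lemma sum_delta n (F : 'I_n -> C) a : \sum_i F i * (i == a)%:R = F a.
Proof.
rewrite (bigD1 a) //= eqxx mulr1 big1 ?addr0 // => i /negbTE ->; by rewrite mulr0.
Qed.

Lemma sum_delta' n (F : 'I_n -> C) a : \sum_i F i * (a == i)%:R = F a.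
Proof. by rewrite -[RHS](sum_delta F a); apply: eq_bigr => i _; rewrite eq_sym. Qed.

Lemma ptrace2D m n (A B : 'M[C]_(m * n)) : ptrace2 (A + B) = ptrace2 A + ptrace2 B.
Proof. by apply/matrixP => i j; rewrite !mxE -big_split; apply: eq_bigr => k _; rewrite mxE. Qed.

Lemma ptrace2Z m n a (A : 'M[C]_(m * n)) : ptrace2 (a *: A) = a *: ptrace2 A.
Proof. by apply/matrixP => i j; rewrite !mxE mulr_sumr; apply: eq_bigr => k _; rewrite mxE. Qed.

Lemma ptrace2B m n (A B : 'M[C]_(m * n)) : ptrace2 (A - B) = ptrace2 A - ptrace2 B.
Proof. by rewrite ptrace2D -scaleN1r ptrace2Z scaleN1r. Qed.

Lemma tr_ptrace2 m n (A : 'M[C]_(m * n)) : \tr (ptrace2 A) = \tr A.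
Proof. by rewrite /mxtrace sum_tens; apply: eq_bigr => i _; rewrite mxE. Qed.

Lemma tr_tens1 m n (M : 'M[C]_m) (Y : 'M[C]_(m * n)) :
  \tr ((M *t (1%:M : 'M[C]_n)) *m Y) = \tr (M *m ptrace2 Y).
Proof.
rewrite /mxtrace sum_tens; apply: eq_bigr => a _.
transitivity (\sum_(c < n) \sum_(a' < m)
   M a a' * Y (mxtens_index (a', c)) (mxtens_index (a, c))).
  apply: eq_bigr => c _; rewrite mxE sum_tens; apply: eq_bigr => a' _.
  rewrite (bigD1 c) //= big1 ?addr0; first by rewrite tensmxE mxE eqxx mulr1.
  by move=> c' /negbTE h; rewrite tensmxE mxE eq_sym h mulr0 mul0r.
rewrite mxE exchange_big; apply: eq_bigr => a' _; rewrite mxE mulr_sumr //.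
Qed.

Lemma ptrace2_1tE m n (Q : 'M[C]_n) (rho : 'M[C]_(m * n)) x y :
  ptrace2 (((1%:M : 'M[C]_m) *t Q) *m rho) x y =
  \sum_(c < n) \sum_(l < n) Q c l * rho (mxtens_index (x, l)) (mxtens_index (y, c)).
Proof.
rewrite mxE; apply: eq_bigr => c _; rewrite mxE sum_tens.
rewrite (bigD1 x) //= [X in _ + X]big1 ?addr0.
  by apply: eq_bigr => l _; rewrite tensmxE mxE eqxx mul1r.
move=> x' /negbTE h; apply: big1 => l _; by rewrite tensmxE mxE eq_sym h mul0r mul0r.
Qed.

Lemma ptrace2_t1E m n (Q : 'M[C]_n) (rho : 'M[C]_(m * n)) x y :
  ptrace2 (rho *m ((1%:M : 'M[C]_m) *t Q)) x y =
  \sum_(c < n) \sum_(l < n) rho (mxtens_index (x, c)) (mxtens_index (y, l)) * Q l c.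
Proof.
rewrite mxE; apply: eq_bigr => c _; rewrite mxE sum_tens.
rewrite (bigD1 y) //= [X in _ + X]big1 ?addr0.
  by apply: eq_bigr => l _; rewrite tensmxE mxE eqxx mul1r.
move=> y' /negbTE h; apply: big1 => l _; by rewrite tensmxE mxE h mul0r mulr0.
Qed.

Lemma ptrace2_comm m n (Q : 'M[C]_n) (rho : 'M[C]_(m * n)) :
  ptrace2 (((1%:M : 'M[C]_m) *t Q) *m rho) = ptrace2 (rho *m ((1%:M : 'M[C]_m) *t Q)).
Proof.
apply/matrixP => x y; rewrite ptrace2_1tE ptrace2_t1E exchange_big /=.
by apply: eq_bigr => c _; apply: eq_bigr => l _; rewrite mulrC.
Qed.

Lemma adjmx_tens m n p q (A : 'M[C]_(m, n)) (B : 'M[C]_(p, q)) :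
  adjmx (A *t B) = adjmx A *t adjmx B.
Proof. by apply/matrixP => i j; rewrite !mxE rmorphM. Qed.

Lemma psd_conj n (Q A : 'M[C]_n) : psd Q -> psd (adjmx A *m Q *m A).
Proof.
move=> [hQ pQ]; split; first by rewrite !adjmxM adjmxK hQ mulmxA.
by move=> v; have := pQ (A *m v); rewrite adjmxM !mulmxA.
Qed.

Lemma proj_herm d a (S : 'M[C]_d) : adjmx S = S -> adjmx (proj_out a S) = proj_out a S.
Proof.
move=> hS; rewrite /proj_out adjmxZ adjmxD adjmxZ hS adjmx1.
by rewrite rmorphXn rmorphN1 fmorphV rmorph_nat.
Qed.

Lemma psd_reindex n m (f : 'I_n -> 'I_m) (g : 'I_m -> 'I_n) (Q : 'M[C]_m) :
  cancel f g -> cancel g f -> psd Q -> psd (\matrix_(i, j) Q (f i) (f j)).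
Proof.
move=> fK gK [hQ pQ]; split.
  by apply/matrixP => i j; rewrite !mxE -[in RHS]hQ !mxE.
move=> v; have := pQ (\col_i v (g i) 0).
rewrite !mxE (reindex g) /=; last by exists f => i _.
have E : forall j, (adjmx v *m \matrix_(i, j0) Q (f i) (f j0)) 0 (g j) * v (g j) 0
   = (adjmx (\col_i v (g i) 0) *m Q) 0 j * (\col_i v (g i) 0) j 0.
  move=> j; rewrite !mxE; congr (_ * _); rewrite (reindex g) /=; last by exists f => i _.
  by apply: eq_bigr => i _; rewrite !mxE !gK.
by rewrite (eq_bigr _ (fun j _ => E j)).
Qed.

Lemma pauli_contract n (F : 'I_(2 ^ n) -> 'I_(2 ^ n) -> C) b b' :
  \sum_(j : n.-tuple 'I_4) (\sum_c \sum_l pauli C j c l * F l c) * pauli C j b b'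
  = (2 ^ n)%:R * F b b'.
Proof.
transitivity (\sum_c \sum_l F l c * \sum_(j : n.-tuple 'I_4) (pauli C j c l * pauli C j b b')).
  under eq_bigr => j _ do rewrite mulr_suml.
  rewrite [LHS]exchange_big /=; apply: eq_bigr => c _.
  under eq_bigr => j _ do rewrite mulr_suml.
  rewrite [LHS]exchange_big /=; apply: eq_bigr => l _.
  rewrite mulr_sumr; apply: eq_bigr => j _; by rewrite mulrAC mulrC.
under eq_bigr => c _ do under eq_bigr => l _ do rewrite pauli_complete.
transitivity (\sum_c (2 ^ n)%:R * (c == b')%:R * F b c).
  apply: eq_bigr => c _; case: (c == b') => /=.
    rewrite (eq_bigr (fun l => (F l c * (2 ^ n)%:R) * (l == b)%:R)).
      by rewrite (sum_delta (fun l => F l c * (2 ^ n)%:R)) mulr1 mulrC.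
    by move=> l _; rewrite mulrA.
  by rewrite mulr0 mul0r; apply: big1 => l _; rewrite mulr0.
rewrite (eq_bigr (fun c => ((2 ^ n)%:R * F b c) * (c == b')%:R)).
  by rewrite (sum_delta (fun c => (2 ^ n)%:R * F b c)).
by move=> c _; rewrite mulrAC.
Qed.

End Tens.



Lemma sAl (R : pzRingType) m n p a (A : 'M[R]_(m, n)) (B : 'M[R]_(n, p)) :
  (a *: A) *m B = a *: (A *m B).
Proof. by rewrite scalemxAl. Qed.
Lemma sAr (R : comPzRingType) m n p a (A : 'M[R]_(m, n)) (B : 'M[R]_(n, p)) :
  A *m (a *: B) = a *: (A *m B).
Proof. by rewrite scalemxAr. Qed.

Definition swapI m n (I : 'I_(m * n)) : 'I_(n * m) :=
  mxtens_index ((mxtens_unindex I).2, (mxtens_unindex I).1).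

Lemma swapIK m n : cancel (@swapI m n) (@swapI n m).
Proof. by move=> I; rewrite /swapI mxtens_indexK /= -[in RHS](mxtens_unindexK I); congr mxtens_index; case: (mxtens_unindex I). Qed.

Section Main.
Variables (C : numClosedFieldType) (nA nB : nat).
Variable P : {linear 'M[C]_(2 ^ nA * 2 ^ nB) -> 'M[C]_(2 ^ nA * 2 ^ nB)}.
Variable T : {linear 'M[C]_(2 ^ nA) -> 'M[C]_(2 ^ nA)}.
Hypothesis hTP : trace_preserving P.
Hypothesis hNS : forall rho : 'M[C]_(2 ^ nA * 2 ^ nB),
      is_state rho -> ptrace2 (P rho) = T (ptrace2 rho).
Variable rho : 'M[C]_(2 ^ nA * 2 ^ nB).
Hypothesis hrho : is_state rho.

Lemma ns_psd X : psd X -> ptrace2 (P X) = T (ptrace2 X).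
Proof.
move=> pX.
have trX : 0 <= \tr X by have := psd_tr_ge0 1%:M pX; rewrite adjmx1 mulmx1 mul1mx.
set c := \tr X + 1.
have c0 : 0 < c by rewrite /c ltr_wpDl.
have cr : (c^-1)^* = c^-1 by apply: conj_Creal; rewrite ger0_real // invr_ge0 ltW.
have hst : is_state (c^-1 *: (X + rho)).
  have pXr := psdD pX hrho.1.
  split; last by rewrite mxtraceZ mxtraceD hrho.2 mulVf // lt0r_neq0.
  split; first by rewrite adjmxZ cr pXr.1.
  move=> v; rewrite -scalemxAr -scalemxAl mxZE; apply: mulr_ge0; [by rewrite invr_ge0 ltW | exact: pXr.2].
have h := hNS hst.
have e : c^-1 *: (ptrace2 (P X) + ptrace2 (P rho)) = c^-1 *: (T (ptrace2 X) + T (ptrace2 rho)).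
  by rewrite -ptrace2D -ptrace2Z -(raddfD P) -(linearZZ P) h ptrace2Z (linearZZ T) ptrace2D (raddfD T).
move/(scalerI (invr_neq0 (lt0r_neq0 c0))): e.
by rewrite (hNS hrho) => /addIr.
Qed.

Definition gk (k : nA.-tuple 'I_4) (M : 'M[C]_(2 ^ nA * 2 ^ nB)) :=
  \tr (pauli C k *m T (ptrace2 M)).

Lemma gE k M : \tr (pauli C k *m T (ptrace2 M)) = gk k M.
Proof. by []. Qed.

Lemma gD k A B : gk k (A + B) = gk k A + gk k B.
Proof. by rewrite /gk ptrace2D raddfD mulmxDr mxtraceD. Qed.

Lemma gZ k a A : gk k (a *: A) = a * gk k A.
Proof. by rewrite /gk ptrace2Z linearZZ -scalemxAr mxtraceZ. Qed.

Lemma trproj d b (S Y : 'M[C]_d) :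
  \tr (proj_out b S *m Y) = 2%:R^-1 * (\tr Y + (-1) ^+ b * \tr (S *m Y)).
Proof. by rewrite /proj_out -scalemxAl mxtraceZ mulmxDl mul1mx -scalemxAl mxtraceD mxtraceZ. Qed.

Lemma psd_proj a (S : 'M[C]_(2 ^ nA * 2 ^ nB)) : adjmx S = S ->
  psd (proj_out a S *m rho *m proj_out a S).
Proof. by move=> hS; have := psd_conj (proj_out a S) hrho.1; rewrite proj_herm. Qed.

Lemma tr2_g k X : psd X -> \tr ((pauli C k *t 1%:M) *m P X) = gk k X.
Proof. by move=> pX; rewrite tr_tens1 ns_psd. Qed.

Lemma corrE j k :
  two_time_corr P rho (1%:M *t pauli C j) (pauli C k *t 1%:M) =
  gk k ((1%:M *t pauli C j) *m rho).
Proof.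
have hS1 : adjmx ((1%:M : 'M[C]_(2 ^ nA)) *t pauli C j) = 1%:M *t pauli C j.
  by rewrite adjmx_tens adjmx1 pauli_herm.
rewrite /two_time_corr !big_bool /= !trproj !tr2_g; try exact: (psd_proj _ hS1).
have gc : gk k (rho *m (1%:M *t pauli C j)) = gk k ((1%:M *t pauli C j) *m rho).
  by rewrite /gk ptrace2_comm.
rewrite /proj_out !(sAl, sAr, mulmxDl, mulmxDr, mul1mx, mulmx1).
rewrite !(gD, gZ) gc /=. by field.
Qed.

Definition Msw : 'M[C]_(2 ^ nB * 2 ^ nA) := \matrix_(I, J) rho (swapI I) (swapI J).

Lemma tr_expand n (M : 'M[C]_n) W : \tr (M *m W) = \sum_c \sum_l M c l * W l c.
Proof. by apply: eq_bigr => c _; rewrite mxE. Qed.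

Lemma R_eq : pdm_B1A2 P rho = ampl T Msw.
Proof.
apply/matrixP => I J.
case: (mxtens_indexP I) => b a; case: (mxtens_indexP J) => b' a'.
set Z := fun j : nB.-tuple 'I_4 => ptrace2 (((1%:M : 'M[C]_(2 ^ nA)) *t pauli C j) *m rho).
have L : pdm_B1A2 P rho (mxtens_index (b, a)) (mxtens_index (b', a')) =
    ((2%:R) ^+ (nA + nB))^-1 * \sum_j pauli C j b b' * ((2 ^ nA)%:R * T (Z j) a a').
  rewrite /pdm_B1A2 mxE summxE; congr (_ * _); apply: eq_bigr => j _.
  rewrite summxE.
  transitivity (\sum_k (\sum_c \sum_l pauli C k c l * T (Z j) l c) * pauli C k a a' * pauli C j b b').
    apply: eq_bigr => k _; rewrite mxE tensmxE corrE /gk tr_expand -/(Z j); ring.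
  by rewrite -mulr_suml pauli_contract mulrC.
rewrite L /ampl mxE !mxtens_indexK /=.
have blk : \matrix_(x, y) Msw (mxtens_index (b, x)) (mxtens_index (b', y)) =
    ((2 ^ nB)%:R)^-1 *: \sum_j pauli C j b b' *: Z j.
  apply/matrixP => x y; rewrite !mxE /swapI !mxtens_indexK /= summxE.
  transitivity (((2 ^ nB)%:R)^-1 * ((2 ^ nB)%:R * rho (mxtens_index (x, b)) (mxtens_index (y, b')))).
    by field; rewrite pnatr_eq0 expn_eq0.
  congr (_ * _); rewrite -(pauli_contract (fun l c => rho (mxtens_index (x, l)) (mxtens_index (y, c))) b b').
  by apply: eq_bigr => j _; rewrite mxE /Z ptrace2_1tE mulrC.
rewrite blk linearZZ raddf_sum mxE summxE.
have E : \sum_k T (pauli C k b b' *: Z k) a a' = \sum_k pauli C k b b' * T (Z k) a a'.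
  by apply: eq_bigr => k _; rewrite (linearZZ T) mxE.
rewrite E.
under eq_bigr => j _ do rewrite mulrCA.
rewrite -mulr_sumr mulrA; congr (_ * _).
by rewrite !natrX exprD invfM mulrAC mulVf ?mul1r // expf_neq0 // pnatr_eq0.
Qed.

Lemma trR : \tr (ampl T Msw) = 1.
Proof.
have e : \sum_(b < 2 ^ nB) (\matrix_(x, y) Msw (mxtens_index (b, x)) (mxtens_index (b, y)) : 'M[C]_(2 ^ nA))
    = ptrace2 rho.
  apply/matrixP => x y; rewrite summxE mxE; apply: eq_bigr => c _; by rewrite !mxE /swapI !mxtens_indexK.
transitivity (\tr rho); last exact: hrho.2.
rewrite -(hTP rho) -[\tr (P rho)]tr_ptrace2 (hNS hrho) -e (raddf_sum T) /mxtrace sum_tens exchange_big /=.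
apply: eq_bigr => a _; rewrite summxE; apply: eq_bigr => b _; by rewrite mxE !mxtens_indexK.
Qed.

Hypothesis hCPT : completely_positive T.

Lemma main_sec : psd (pdm_B1A2 P rho) /\ pdm_negativity (pdm_B1A2 P rho) = 0.
Proof.
have pR : psd (pdm_B1A2 P rho).
  rewrite R_eq; apply: hCPT; exact: (psd_reindex (@swapIK _ _) (@swapIK _ _) hrho.1).
split => //.
rewrite /pdm_negativity /trnorm pR.1.
set R := pdm_B1A2 P rho.
have [pS eS] : psd (sqrtm (R *m R)) /\ sqrtm (R *m R) *m sqrtm (R *m R) = R *m R.
  rewrite /sqrtm; apply: (@epsilon_spec _ (inhabits 0) (fun S : 'M[C]_(2 ^ nB * 2 ^ nA) => psd S /\ S *m S = R *m R)); by exists R.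
by rewrite (psd_sqrt_unique pS pR eS) /R R_eq trR subrr.
Qed.

End Main.

Theorem theorem3 (C : numClosedFieldType) (nA nB : nat)
  (P : {linear 'M[C]_(2 ^ nA * 2 ^ nB) -> 'M[C]_(2 ^ nA * 2 ^ nB)})
  (T : {linear 'M[C]_(2 ^ nA) -> 'M[C]_(2 ^ nA)}) :
  completely_positive P -> trace_preserving P ->
  completely_positive T ->
  (forall rho : 'M[C]_(2 ^ nA * 2 ^ nB),
      is_state rho -> ptrace2 (P rho) = T (ptrace2 rho)) ->
  forall rho : 'M[C]_(2 ^ nA * 2 ^ nB), is_state rho ->
    psd (pdm_B1A2 P rho) /\ pdm_negativity (pdm_B1A2 P rho) = 0.
Proof.
move=> _ hTP hCPT hNS rho hrho.
exact: (main_sec hTP hNS hrho hCPT).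
Qed.
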